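(* Let $I$ and $J$ be intervals of $B$. - If $I,J\in\mathcal{L}$, then $\mathrm{Hom}_B(k_I,k_J)\ne0$ if and only if $J\subseteq I$. - If $I,J\in\mathcal{R}$, then $\mathrm{Hom}_B(k_I,k_J)\ne0$ if and only if $I\subseteq J$.
   Context: Let $k$ be a field. The bipath poset $B$ has underlying set $(\mathbb{R}\times\{1,2\})\sqcup\{-\infty,+\infty\}$. Its order is: $x\le y$ iff $x=-\infty$, or $y=+\infty$, or $x=(s,i)$, $y=(t,i)$ with the same $i$ and $s\le t$. $B$-persistence modules are functors from $B$ (as a category) to $k$-vector spaces; $\mathrm{Hom}_B$ denotes natural transformations. An interval of $B$ is a nonempty convex and connected subset (convex: $p,q\in I$, $p\le r\le q$ imply $r\in I$; connected: any two elements are joined by a finite sequence in $I$ with consecutive ones comparable). The interval module $k_I$ is $k$ on $I$ and $0$ elsewhere, with identity maps within $I$ and zero maps otherwise. $\mathcal{L}$ is the set of intervals $\neq B$ containing $-\infty$; $\mathcal{R}$ is the set of intervals $\neq B$ containing $+\infty$. *)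

(* Defs.v *)
From Stdlib Require Import Reals.
From HB Require Import structures.
From mathcomp Require Import all_boot all_order all_algebra.
From mathcomp Require Import boolp.
Set Implicit Arguments. Unset Strict Implicit. Unset Printing Implicit Defensive.
Import GRing.Theory.

(* The bipath poset B = (R x {1,2}) ⊔ {-oo,+oo}; the index i in {1,2} is a bool. *)
Inductive bip : Type :=
| bot : bip
| top : bip
| pt : R -> bool -> bip.

Definition ble (x y : bip) : Prop :=
  match x, y with
  | bot, _ => True
  | _, top => True
  | pt s i, pt t j => i = j /\ Rle s t
  | _, _ => False
  end.

(* connectivity inside I: a finite sequence in I with consecutive comparable *)
Inductive zigzag (I : bip -> Prop) : bip -> bip -> Prop :=
| zz_refl x : I x -> zigzag I x x
| zz_step x y z : I x -> (ble x y \/ ble y x) -> zigzag I y z -> zigzag I x z.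

Definition is_interval (I : bip -> Prop) : Prop :=
  (exists p, I p) /\
  (forall p q r, I p -> I q -> ble p r -> ble r q -> I r) /\
  (forall p q, I p -> I q -> zigzag I p q).

Definition subsetB (I J : bip -> Prop) : Prop := forall p, I p -> J p.

Definition in_L (I : bip -> Prop) : Prop :=
  is_interval I /\ (exists p, ~ I p) /\ I bot.
Definition in_R (I : bip -> Prop) : Prop :=
  is_interval I /\ (exists p, ~ I p) /\ I top.

Record pmod (k : fieldType) := PMod {
  pobj : bip -> lmodType k;
  pmap : forall p q : bip, {linear pobj p -> pobj q}
}.

Definition is_functor (k : fieldType) (V : pmod k) : Prop :=
  (forall p (v : pobj V p), pmap V p p v = v) /\
  (forall p q r (v : pobj V p), ble p q -> ble q r ->
      pmap V q r (pmap V p q v) = pmap V p r v).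

Definition is_nat_trans (k : fieldType) (V W : pmod k)
  (eta : forall p, {linear pobj V p -> pobj W p}) : Prop :=
  forall p q (v : pobj V p), ble p q ->
    eta q (pmap V p q v) = pmap W p q (eta p v).

Definition hom_nonzero (k : fieldType) (V W : pmod k) : Prop :=
  exists eta : forall p, {linear pobj V p -> pobj W p},
    is_nat_trans eta /\ exists p (v : pobj V p), eta p v != GRing.zero.

(* Interval module k_I: the space at p is 'rV[k]_1 (= k) if p \in I and
   'rV[k]_0 (= 0) otherwise; the structure map p -> q is right multiplication
   by the all-ones (d p) x (d q) matrix, i.e. the identity of k when p, q \in I
   and the zero map otherwise. *)
Definition idim (I : bip -> Prop) (p : bip) : nat := nat_of_bool `[< I p >].

Definition intmod (k : fieldType) (I : bip -> Prop) : pmod k :=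
  @PMod k (fun p => 'rV[k]_(idim I p))
    (fun p q => mulmxr (const_mx (GRing.one k) : 'M[k]_(idim I p, idim I q))).

(* Main.v *)
Require Import Defs.
From Stdlib Require Import Reals.
From mathcomp Require Import all_boot all_algebra.
From mathcomp Require Import boolp.
Import GRing.Theory.
Local Open Scope ring_scope.

Section Aux.
Context {k : fieldType}.

Lemma rv0 n (x : 'rV[k]_n) : n = 0%N -> x = 0.
Proof. move=> Hn; apply/rowP => i; case: i => i Hi; exfalso; by rewrite Hn in Hi. Qed.

Lemma mul1one (v : 'rV[k]_1) : v *m (const_mx 1 : 'M[k]_(1,1)) = v.
Proof.
apply/rowP => i; rewrite !mxE big_ord1 !mxE mulr1.
by rewrite (ord1 i).
Qed.

Lemma sq1 a1 a2 b1 b2 (f : {linear 'rV[k]_a1 -> 'rV[k]_b1})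
  (g : {linear 'rV[k]_a2 -> 'rV[k]_b2}) :
  a1 = 1%N -> a2 = 1%N -> b1 = 1%N -> b2 = 1%N ->
  (forall v, g (v *m const_mx 1) = f v *m const_mx 1) ->
  (exists w, f w != 0) -> exists u, g u != 0.
Proof.
move=> ????; subst => H [w Hw]; exists (w *m const_mx 1).
by rewrite H mul1one.
Qed.

Lemma sq1' a1 a2 b1 b2 (f : {linear 'rV[k]_a1 -> 'rV[k]_b1})
  (g : {linear 'rV[k]_a2 -> 'rV[k]_b2}) :
  a1 = 1%N -> a2 = 1%N -> b1 = 1%N -> b2 = 1%N ->
  (forall v, g (v *m const_mx 1) = f v *m const_mx 1) ->
  (exists w, g w != 0) -> exists u, f u != 0.
Proof.
move=> ????; subst => H [w Hw]; exists w.
by rewrite -(mul1one w) H mul1one in Hw.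
Qed.

Lemma sqL2 a1 a2 b1 b2 (f : {linear 'rV[k]_a1 -> 'rV[k]_b1})
  (g : {linear 'rV[k]_a2 -> 'rV[k]_b2}) :
  a1 = 1%N -> a2 = 0%N -> b1 = 1%N -> b2 = 1%N ->
  (forall v, g (v *m const_mx 1) = f v *m const_mx 1) ->
  (exists w, f w != 0) -> False.
Proof.
move=> ????; subst => H [w Hw].
move: (H w); rewrite (@rv0 _ (w *m const_mx 1) erefl) linear0 mul1one => E.
by rewrite -E eqxx in Hw.
Qed.

Lemma sqR2 a1 a2 b1 b2 (f : {linear 'rV[k]_a1 -> 'rV[k]_b1})
  (g : {linear 'rV[k]_a2 -> 'rV[k]_b2}) :
  a1 = 1%N -> a2 = 1%N -> b1 = 0%N -> b2 = 1%N ->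
  (forall v, g (v *m const_mx 1) = f v *m const_mx 1) ->
  (exists w, g w != 0) -> False.
Proof.
move=> ????; subst => H [w Hw].
move: (H w); rewrite (@rv0 _ (f w) erefl) mul0mx mul1one => E.
by rewrite E eqxx in Hw.
Qed.

Lemma natsq a b c d (v : 'rV[k]_a) :
  (a = 0%N \/ d = 0%N \/ b = c) ->
  v *m (const_mx 1 : 'M[k]_(a,b)) *m (const_mx 1 : 'M[k]_(b,d)) =
  v *m (const_mx 1 : 'M[k]_(a,c)) *m (const_mx 1 : 'M[k]_(c,d)).
Proof.
case=> [Ha|[Hd|Hbc]].
- by rewrite (@rv0 _ v Ha) !mul0mx.
- by apply/rowP => -[i Hi]; exfalso; rewrite Hd in Hi.
- by subst.
Qed.

Lemma nz1 a b : a = 1%N -> b = 1%N ->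
  (const_mx 1 : 'rV[k]_a) *m (const_mx 1 : 'M[k]_(a,b)) != 0.
Proof.
move=> ??; subst; rewrite mul1one; apply/negP => /eqP/rowP/(_ ord0).
rewrite !mxE => /eqP; by rewrite oner_eq0.
Qed.

End Aux.
Arguments sq1 {k a1 a2 b1 b2 f g}. Arguments sq1' {k a1 a2 b1 b2 f g}.
Arguments sqL2 {k a1 a2 b1 b2 f g}. Arguments sqR2 {k a1 a2 b1 b2 f g}.
Arguments nz1 {k a b}.

Lemma idim_in I p : I p -> idim I p = 1%N.
Proof. by rewrite /idim; case: asboolP. Qed.
Lemma idim_out I p : ~ I p -> idim I p = 0%N.
Proof. by rewrite /idim; case: asboolP. Qed.
Arguments idim_in {I p}. Arguments idim_out {I p}.

Lemma nz_in k I J (eta : forall p, {linear pobj (intmod k I) p -> pobj (intmod k J) p})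
  p (v : pobj (intmod k I) p) : eta p v != 0 -> I p /\ J p.
Proof.
move=> Hv; split.
- have [//|nI] := pselect (I p).
  by rewrite (@rv0 _ _ v (idim_out nI)) linear0 eqxx in Hv.
- have [//|nJ] := pselect (J p).
  by rewrite (@rv0 _ _ (eta p v) (idim_out nJ)) eqxx in Hv.
Qed.

Arguments nz_in {k I J eta p v}.

Theorem lemma4p7 (k : fieldType) (I J : bip -> Prop) :
  is_interval I -> is_interval J ->
  (in_L I -> in_L J -> (hom_nonzero (intmod k I) (intmod k J) <-> subsetB J I)) /\
  (in_R I -> in_R J -> (hom_nonzero (intmod k I) (intmod k J) <-> subsetB I J)).
Proof.
move=> [_ [cI _]] [_ [cJ _]]; split.
- move=> [_ [_ Ib]] [_ [_ Jb]]; split.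
  + move=> [eta [Hn [p [v Hv]]]] q Jq.
    have [Ip Jp] := nz_in Hv.
    have Hb : exists w, eta bot w != 0.
      have Hs : forall w : 'rV[k]_(idim I bot),
          eta p (w *m const_mx 1) = eta bot w *m const_mx 1 := fun w => Hn bot p w Logic.I.
      apply: (sq1' (idim_in Ib) (idim_in Ip) (idim_in Jb) (idim_in Jp) Hs); by exists v.
    have [//|nIq] := pselect (I q).
    have Hs : forall w : 'rV[k]_(idim I bot),
        eta q (w *m const_mx 1) = eta bot w *m const_mx 1 := fun w => Hn bot q w Logic.I.
    exfalso; exact: (sqL2 (idim_in Ib) (idim_out nIq) (idim_in Jb) (idim_in Jq) Hs Hb).
  + move=> JI.
    exists (fun p => mulmxr (const_mx 1)); split.
    * move=> p q v Hpq /=.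
      apply: natsq.
      have [Ip|nIp] := pselect (I p); last by left; exact: idim_out.
      have [Jq|nJq] := pselect (J q); last by right; left; exact: idim_out.
      right; right; rewrite (idim_in (JI _ Jq)) (idim_in (cJ bot q p Jb Jq Logic.I Hpq)) //.
    * exists bot, (const_mx 1); exact: nz1 (idim_in Ib) (idim_in Jb).
- move=> [_ [_ It]] [_ [_ Jt]]; split.
  + move=> [eta [Hn [p [v Hv]]]] q Iq.
    have [Ip Jp] := nz_in Hv.
    have Ht : exists w, eta top w != 0.
      have Hs : forall w : 'rV[k]_(idim I p),
          eta top (w *m const_mx 1) = eta p w *m const_mx 1.
        by move=> w; apply: Hn; case: (p).
      apply: (sq1 (idim_in Ip) (idim_in It) (idim_in Jp) (idim_in Jt) Hs); by exists v.
    have [//|nJq] := pselect (J q).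
    have Hs : forall w : 'rV[k]_(idim I q),
        eta top (w *m const_mx 1) = eta q w *m const_mx 1.
      by move=> w; apply: Hn; case: (q).
    exfalso; exact: (sqR2 (idim_in Iq) (idim_in It) (idim_out nJq) (idim_in Jt) Hs Ht).
  + move=> IJ.
    exists (fun p => mulmxr (const_mx 1)); split.
    * move=> p q v Hpq /=.
      apply: natsq.
      have [Ip|nIp] := pselect (I p); last by left; exact: idim_out.
      have [Jq|nJq] := pselect (J q); last by right; left; exact: idim_out.
      right; right; rewrite (idim_in (IJ _ Ip)) (idim_in (cI p top q Ip It Hpq _)) //.
      by case: (q).
    * exists top, (const_mx 1); exact: nz1 (idim_in It) (idim_in Jt).
Qed.
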